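(* Let $\mathbf G$ be a finite group with a subgroup sequence $\{I\}=\mathbf G_0<\mathbf G_1<\cdots<\mathbf G_m=\mathbf G$, generating sets $X_{\mathbf G_k}$ of $\mathbf G_k$, and coset leader sets $\operatorname{CL}(\mathbf G_k/\mathbf G_{k-1})$, such that the Error Control Property holds for every consecutive pair $\mathbf G_{k-1}<\mathbf G_k$ (with respect to $X_{\mathbf G_{k-1}}$, $X_{\mathbf G_k}$ and $\operatorname{CL}(\mathbf G_k/\mathbf G_{k-1})$). Let $g\in\mathbf G$ have canonical form $g=c_m\cdots c_1$ with $c_k\in\operatorname{CL}(\mathbf G_k/\mathbf G_{k-1})$. Then for any $b\in X_{\mathbf G}\cup X_{\mathbf G}^{-1}$, the canonical form $bg=c'_m\cdots c'_1$ ($c'_k\in\operatorname{CL}(\mathbf G_k/\mathbf G_{k-1})$) satisfies $c'_i=c_i$ for all but one index $i$; moreover, for that single index $j$ with $c'_j\neq c_j$, the vertex $c'_j$ is adjacent to $c_j$ in the coset leader graph for $\mathbf G_j$ over $\mathbf G_{j-1}$.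
   Context: $\operatorname{CL}(\mathbf G_k/\mathbf G_{k-1})$ is a set of representatives of the left cosets of $\mathbf G_{k-1}$ in $\mathbf G_k$ containing $I$; every $g\in\mathbf G$ is uniquely $c_m\cdots c_1$ with $c_k\in\operatorname{CL}(\mathbf G_k/\mathbf G_{k-1})$ (canonical form). For a set $X$, $X^{-1}=\{a^{-1}:a\in X\}$. Error Control Property for subgroups $H<K$, coset leaders $\operatorname{CL}(K/H)$ and generating sets $X_H$, $X_K$: for all $b\in X_K\cup X_K^{-1}$ and $c\in\operatorname{CL}(K/H)$, either $bc\in\operatorname{CL}(K/H)$ or $c^{-1}bc\in X_H\cup X_H^{-1}$. The coset leader graph for $K$ over $H$ (with respect to $X_K$) has vertex set $\operatorname{CL}(K/H)$ and a directed edge labelled $a$ from $c$ to $d$ whenever $c=ad$ with $a\in X_K$; two vertices are adjacent if joined by an edge in either direction. *)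

(* Defs.v *)
From mathcomp Require Import all_boot all_fingroup.
Set Implicit Arguments. Unset Strict Implicit. Unset Printing Implicit Defensive.
Local Open Scope group_scope.

Section Defs.
Variable gT : finGroupType.

Definition coset_leaders (H K C : {set gT}) : Prop :=
  [/\ C \subset K, (1 : gT) \in C &
      forall x, x \in K -> exists! c, c \in C /\ x \in c *: H].

Definition error_control (XH XK CL : {set gT}) : Prop :=
  forall b c, b \in XK :|: XK^-1 -> c \in CL ->
    (b * c \in CL) \/ (c^-1 * b * c \in XH :|: XH^-1).

Definition cl_adjacent (X CL : {set gT}) (c d : gT) : Prop :=
  [/\ c \in CL, d \in CL & exists2 a, a \in X & (c = a * d \/ d = a * c)].

(* the product c_m * ... * c_1 *)
Definition canon_prod (m : nat) (c : nat -> gT) : gT :=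
  \prod_(i < m) c (m - i)%N.
End Defs.

(* Main.v *)
Require Import Defs.
From mathcomp Require Import all_boot all_fingroup.
Local Open Scope group_scope.

Lemma canon_prodS (gT : finGroupType) n (f : nat -> gT) :
  canon_prod n.+1 f = f n.+1 * canon_prod n f.
Proof.
rewrite /canon_prod big_ord_recl subn0; congr (_ * _).
Qed.

Lemma canon_prod_eq (gT : finGroupType) n (f g : nat -> gT) :
  (forall i, (1 <= i <= n)%N -> f i = g i) -> canon_prod n f = canon_prod n g.
Proof.
elim: n => [|n IH] H; first by rewrite /canon_prod !big_ord0.
rewrite !canon_prodS H ?leqnn // IH // => i /andP [h1 h2].
by apply: H; rewrite h1 ltnW.
Qed.

Definition upd (gT : finGroupType) (f : nat -> gT) j d i := if i == j then d else f i.
Arguments upd {gT}.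

Theorem mainTheorem7 (gT : finGroupType) (m : nat)
  (Gs : nat -> {group gT}) (X CL : nat -> {set gT})
  (HG0 : Gs 0%N = 1 :> {set gT})
  (Hchain : forall k, (1 <= k <= m)%N -> Gs k.-1 \proper Gs k)
  (HX : forall k, (k <= m)%N -> <<X k>> = Gs k)
  (HCL : forall k, (1 <= k <= m)%N -> coset_leaders (Gs k.-1) (Gs k) (CL k))
  (HECP : forall k, (1 <= k <= m)%N -> error_control (X k.-1) (X k) (CL k))
  (g : gT) (c : nat -> gT)
  (Hc : forall k, (1 <= k <= m)%N -> c k \in CL k)
  (Hg : g = canon_prod m c)
  (b : gT) (Hb : b \in X m :|: (X m)^-1)
  (c' : nat -> gT)
  (Hc' : forall k, (1 <= k <= m)%N -> c' k \in CL k)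
  (Hbg : b * g = canon_prod m c') :
  (exists j, forall i, (1 <= i <= m)%N -> i != j -> c' i = c i) /\
  (forall j, (1 <= j <= m)%N -> c' j != c j -> cl_adjacent (X j) (CL j) (c j) (c' j)).
Proof.
have Pmem : forall n (f : nat -> gT), (n <= m)%N ->
    (forall i, (1 <= i <= n)%N -> f i \in CL i) -> canon_prod n f \in Gs n.
  elim=> [|n IH] f Hn Hf; first by rewrite /canon_prod big_ord0 group1.
  rewrite canon_prodS groupM //.
    have [sub _ _] := HCL n.+1 (Hn).
    by apply: (subsetP sub); apply: Hf; rewrite leqnn.
  have /proper_sub sub := Hchain n.+1 Hn.
  apply: (subsetP sub); apply: IH; first exact: ltnW.
  by move=> i /andP [h1 h2]; apply: Hf; rewrite h1 ltnW.
have Uniq : forall n (f h : nat -> gT), (n <= m)%N ->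
    (forall i, (1 <= i <= n)%N -> f i \in CL i) ->
    (forall i, (1 <= i <= n)%N -> h i \in CL i) ->
    canon_prod n f = canon_prod n h -> forall i, (1 <= i <= n)%N -> f i = h i.
  elim=> [|n IH] f h Hn Hf Hh E i; first by case/andP=> a b0; move: (leq_trans a b0).
  have Hf' : forall i, (1 <= i <= n)%N -> f i \in CL i.
    by move=> k /andP [h1 h2]; apply: Hf; rewrite h1 ltnW.
  have Hh' : forall i, (1 <= i <= n)%N -> h i \in CL i.
    by move=> k /andP [h1 h2]; apply: Hh; rewrite h1 ltnW.
  have fin := Hf n.+1 (leqnn _); have hin := Hh n.+1 (leqnn _).
  have [sub _ U] := HCL n.+1 Hn.
  have xin : canon_prod n.+1 f \in Gs n.+1.
    by apply: Pmem => //.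
  have [c0 [_ Uc]] := U _ xin.
  have eqn1 : f n.+1 = h n.+1.
    have e1 : c0 = f n.+1.
      apply: Uc; split=> //; rewrite canon_prodS mem_lcoset mulKg /=.
      by apply: Pmem => //; apply: ltnW.
    have e2 : c0 = h n.+1.
      apply: Uc; split=> //; rewrite E canon_prodS mem_lcoset mulKg /=.
      by apply: Pmem => //; apply: ltnW.
    by rewrite -e1 -e2.
  move: E; rewrite !canon_prodS eqn1 => /mulgI E.
  case/andP=> h1; rewrite leq_eqVlt => /orP [/eqP -> //|h2].
  by apply: (IH f h (ltnW Hn) Hf' Hh' E); rewrite h1.
have Main : forall n b0, (n <= m)%N -> b0 \in X n :|: (X n)^-1 ->
    exists j d0, [/\ (j <= n)%N, b0 * canon_prod n c = canon_prod n (upd c j d0) &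
      ((1 <= j)%N -> d0 \in CL j /\ (d0 = c j \/ cl_adjacent (X j) (CL j) (c j) d0))].
  elim=> [|n IH] b0 Hn Hb0.
    exists 0%N, (c 0%N); split=> //.
    have : b0 \in Gs 0%N.
      rewrite -HX //; case/setUP: Hb0 => H; first exact: mem_gen.
      by rewrite -groupV; apply: mem_gen; rewrite inE in H.
    by rewrite HG0 => /set1P ->; rewrite mul1g /canon_prod !big_ord0.
  have cin := Hc n.+1 Hn.
  case: (HECP n.+1 Hn b0 (c n.+1) Hb0 cin) => H.
    exists n.+1, (b0 * c n.+1); split=> //.
      rewrite !canon_prodS mulgA /upd eqxx; congr (_ * _).
      apply: canon_prod_eq => i /andP [_ h2].
      by rewrite (ltn_eqF (leq_ltn_trans h2 (ltnSn n))).
    move=> _; split=> //; right; split=> //.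
    case/setUP: Hb0 => hb.
      by exists b0 => //; right.
    by exists b0^-1; [rewrite -mem_invg | left; rewrite mulKg].
  have [j [d0 [hj E P]]] := IH _ (ltnW Hn) H.
  exists j, d0; split => //; first exact: leqW.
  rewrite !canon_prodS /upd (gtn_eqF (leq_ltn_trans hj (ltnSn _))) -/(upd c j d0) -E.
  by rewrite !mulgA mulgV mul1g.
have [j [d0 [hj E P]]] := Main m b (leqnn _) Hb.
rewrite Hg E in Hbg.
have Hu : forall i, (1 <= i <= m)%N -> upd c j d0 i \in CL i.
  move=> i hi; rewrite /upd; case: eqP => [ei|_]; last exact: Hc.
  subst i; case/andP: hi => h1 _; by case: (P h1).
have Eq := Uniq m _ _ (leqnn _) Hu Hc' Hbg.
split.
  exists j => i hi hij; by rewrite -Eq // /upd (negbTE hij).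
move=> k hk; rewrite -Eq // /upd; case: ifP => [/eqP ekj|_]; last by rewrite eqxx.
subst k => ne; case/andP: hk => h1 _.
have [_ [e|//]] := P h1; by rewrite e eqxx in ne.
Qed.
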